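(* Let $\alpha,\beta,\gamma\in\mathbb{Z}[i]$ satisfy $\alpha^2+i\beta^2+\gamma^2=0$, $\alpha\beta\gamma\neq0$ and $\gcd(\alpha,\beta,\gamma)\in U$. Then $\alpha\beta\gamma\equiv0\pmod{1+i}$.
   Context: $\mathbb{Z}[i]$ is the ring of Gaussian integers, $U=\{1,-1,i,-i\}$ its unit group; $\gcd(\alpha,\beta,\gamma)\in U$ means no common non-unit divisor. *)

(* Defs.v *)
(* Gaussian integers Z[i] modeled concretely as pairs of
   integers (a, b) standing for a + b i, with the ring operations below. *)
From mathcomp Require Import all_boot all_order all_algebra.
Set Implicit Arguments. Unset Strict Implicit. Unset Printing Implicit Defensive.
Import GRing.Theory Num.Theory.
Local Open Scope ring_scope.

Record gint := GI { gre : int; gim : int }.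

Definition gzero : gint := GI 0 0.
Definition gone : gint := GI 1 0.
Definition gi : gint := GI 0 1.
Definition gadd (x y : gint) : gint := GI (gre x + gre y) (gim x + gim y).
Definition gmul (x y : gint) : gint :=
  GI (gre x * gre y - gim x * gim y) (gre x * gim y + gim x * gre y).

Definition gdvd (d x : gint) : Prop := exists q : gint, x = gmul d q.

Definition gunit (u : gint) : Prop :=
  u = GI 1 0 \/ u = GI (-1) 0 \/ u = GI 0 1 \/ u = GI 0 (-1).

Definition gcd3_unit (a b c : gint) : Prop :=
  forall d : gint, gdvd d a -> gdvd d b -> gdvd d c -> gunit d.

(* Main.v *)
Require Import Defs.
From mathcomp Require Import all_boot all_order all_algebra.
From mathcomp Require Import zify ring.
Import GRing.Theory Num.Theory.

Local Open Scope ring_scope.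

Lemma par (x : int) : exists u, x = 2 * u \/ x = 2 * u + 1.
Proof.
exists (x %/ 2)%Z. have h := divz_eq x 2.
have h1 : (0 <= x %% 2)%Z by apply: modz_ge0.
have h2 : (x %% 2 < 2)%Z by apply: ltz_pmod.
lia.
Qed.

Lemma key (a1 a2 b1 b2 c1 c2 : int) :
  (a1*a2 + a2*a1) + (b1*b1 - b2*b2) + (c1*c2+c2*c1) = 0 -> exists k, b1 + b2 = 2 * k.
Proof.
move=> H; have [u [E1|E1]] := par b1; have [v [E|E]] := par b2;
  rewrite E1 E in H *.
- by exists (u+v); lia.
- exfalso.
  have : 2*(a1*a2 + 2*u*u - 2*v*v - 2*v + c1*c2) - 1 = 0 by rewrite -H; ring.
  lia.
- exfalso.
  have : 2*(a1*a2 + 2*u*u + 2*u - 2*v*v + c1*c2) + 1 = 0 by rewrite -H; ring.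
  lia.
- by exists (u+v+1); lia.
Qed.

Lemma pr (x y : gint) k : gre y + gim y = 2 * k ->
  exists k', gre (gmul x y) + gim (gmul x y) = 2 * k'.
Proof.
case: x y => a b [c d] /= H.
exists (a * k + b * (k - d)).
have -> : a * c - b * d + (a * d + b * c) = a * (c + d) + b * (c + d) - 2 * b * d by ring.
rewrite H; ring.
Qed.

Lemma pl (x y : gint) k : gre x + gim x = 2 * k ->
  exists k', gre (gmul x y) + gim (gmul x y) = 2 * k'.
Proof.
case: x y => a b [c d] /= H.
exists (c * k + d * (k - b)).
have -> : a * c - b * d + (a * d + b * c) = c * (a + b) + d * (a + b) - 2 * b * d by ring.
rewrite H; ring.
Qed.

Lemma dvd_of (x : gint) k : gre x + gim x = 2 * k -> gdvd (GI 1%:Z 1%:Z) x.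
Proof.
case: x => r m /= H; exists (GI k (m - k)); rewrite /gmul /=; congr GI.
- lia.
- lia.
Qed.

Theorem lemma4p5 (alpha beta gamma : gint) :
  gadd (gadd (gmul alpha alpha) (gmul gi (gmul beta beta))) (gmul gamma gamma)
    = gzero ->
  gmul (gmul alpha beta) gamma <> gzero ->
  gcd3_unit alpha beta gamma ->
  gdvd (GI 1%:Z 1%:Z) (gmul (gmul alpha beta) gamma).
Proof.
move=> H _ _.
have Hi := congr1 gim H.
case: alpha beta gamma H Hi => a1 a2 [b1 b2] [c1 c2] H /= Hi.
have [k Hk] : exists k, b1 + b2 = 2 * k.
  apply: (@key a1 a2 b1 b2 c1 c2).
  rewrite -Hi /=; ring.
have [k1 H1] := @pr (GI a1 a2) (GI b1 b2) k Hk.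
have [k2 H2] := @pl (gmul (GI a1 a2) (GI b1 b2)) (GI c1 c2) k1 H1.
exact (dvd_of _ _ H2).
Qed.
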